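(* Let $\Gamma\in\mathcal S$ have $n$ vertices and let $\varphi$ be an embedding into $\mathbb Z^n$ such that exactly one index is of type (9), exactly one is of type (5), exactly one index $k$ is of type (2), and every other index is of type (4) or (7). Let $v$ be the unique vertex whose image $\varphi(v)$ has nonzero coefficient at $E_k$. Then $d(v)=-2$; in fact $\varphi(v)=E_{i_v}-E_k$ for some index $i_v$.
   Context: A plumbing tree is a finite tree $\Gamma$ each of whose vertices $v$ carries an integer decoration $d(v)$. $\Gamma$ is minimal if no vertex has decoration $-1$. For $n\ge 1$ let $(\mathbb Z^n,Q_n)$ be the lattice with basis $E_1,\dots,E_n$ and $Q_n(E_i,E_j)=-\delta_{ij}$, and let $K=\sum_{i=1}^n E_i$. A plumbing tree $\Gamma$ on $n$ vertices is a symplectic plumbing tree if there is a map $\varphi$ (an embedding) from its vertex set to $\mathbb Z^n$ such that: for distinct vertices $v_1,v_2$, $Q_n(\varphi(v_1),\varphi(v_2))$ is $1$ if they are adjacent and $0$ otherwise; $Q_n(\varphi(v),\varphi(v))=d(v)$ for every $v$; and $Q_n(\varphi(v),K)+Q_n(\varphi(v),\varphi(v))=-2$ for every $v$. $\mathcal S$ is the set of minimal, connected symplectic plumbing trees. Index types: write $\varphi(v)=\sum_i a_{v,i}E_i$; for an index $i$ consider the multiset of nonzero coefficients $a_{v,i}$ as $v$ ranges over all vertices. Index $i$ is of type (1) if this multiset is $\{1\}$, (2) if $\{-1\}$, (3) if $\{-2\}$, (4) if $\{1,-1\}$, (5) if $\{1,-2\}$, (6) if $\{-1,-1\}$, (7)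 if $\{1,-1,-1\}$, (9) if $\{1,-1,-1,-1\}$, and (10) if it is empty. *)

(* Defs.v *)
From mathcomp Require Import all_boot all_order all_algebra.
Set Implicit Arguments. Unset Strict Implicit. Unset Printing Implicit Defensive.
Import Order.TTheory GRing.Theory Num.Theory.
Local Open Scope ring_scope.

(* A plumbing graph on n vertices: vertex set 'I_n, adjacency relation adj,
   decoration d.  Vectors of Z^n are functions 'I_n -> int. *)

Definition simple_graph (n : nat) (adj : rel 'I_n) : Prop :=
  (forall x y, adj x y = adj y x) /\ (forall x, ~~ adj x x).

Definition graph_connected (n : nat) (adj : rel 'I_n) : Prop :=
  forall x y, connect adj x y.

(* A cycle: distinct vertices x, s_1, ..., s_m (m >= 2) consecutive adjacent,
   with the last adjacent to x. *)
Definition acyclic (n : nat) (adj : rel 'I_n) : Prop :=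
  forall (x : 'I_n) (s : seq 'I_n),
    uniq (x :: s) -> (2 <= size s)%N -> path adj x s -> ~~ adj (last x s) x.

Definition is_tree (n : nat) (adj : rel 'I_n) : Prop :=
  simple_graph adj /\ graph_connected adj /\ acyclic adj.

Definition Qn (n : nat) (x y : 'I_n -> int) : int := - \sum_(i < n) x i * y i.

Definition E (n : nat) (i : 'I_n) : 'I_n -> int := fun j => (i == j)%:Z.

Definition Kvec (n : nat) : 'I_n -> int := fun _ => 1.

Definition minimal (n : nat) (d : 'I_n -> int) : Prop := forall v, d v != -1.

Definition symplectic_embedding (n : nat) (adj : rel 'I_n) (d : 'I_n -> int)
    (phi : 'I_n -> 'I_n -> int) : Prop :=
  (forall v1 v2, v1 != v2 -> Qn (phi v1) (phi v2) = (adj v1 v2)%:Z) /\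
  (forall v, Qn (phi v) (phi v) = d v) /\
  (forall v, Qn (phi v) (@Kvec n) + Qn (phi v) (phi v) = -2).

(* The multiset (as a sequence, compared up to permutation) of nonzero
   coefficients at index i, over all vertices. *)
Definition coeffs (n : nat) (phi : 'I_n -> 'I_n -> int) (i : 'I_n) : seq int :=
  [seq phi v i | v <- enum 'I_n & phi v i != 0].

Definition index_type (n : nat) (phi : 'I_n -> 'I_n -> int) (i : 'I_n)
    (m : seq int) : bool := perm_eq (coeffs phi i) m.

Definition type2 n phi i := @index_type n phi i [:: -1].
Definition type4 n phi i := @index_type n phi i [:: 1; -1].
Definition type5 n phi i := @index_type n phi i [:: 1; -2].
Definition type7 n phi i := @index_type n phi i [:: 1; -1; -1].
Definition type9 n phi i := @index_type n phi i [:: 1; -1; -1; -1].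

(* Main.v *)
Require Import Defs.
From mathcomp Require Import all_boot all_order all_algebra.
From mathcomp Require Import ring lra zify.
Import Order.TTheory GRing.Theory Num.Theory.
Local Open Scope ring_scope.

Lemma ker_exists (n : nat) (k : 'I_n) (a : 'I_n -> 'I_n -> rat) :
  exists z : 'I_n -> rat, (exists u, z u != 0) /\
     forall c, c != k -> \sum_u z u * a u c = 0.
Proof.
pose A : 'M[rat]_n := \matrix_(u, c) (if c == k then 0 else a u c).
have dA : \det A = 0.
  by rewrite (expand_det_col _ k) big1 // => i _; rewrite mxE eqxx mul0r.
have : kermx A != 0 by rewrite kermx_eq0 row_free_unit unitmxE dA unitr0.
case/matrix0Pn => i [j nz].
exists (fun u => kermx A i u); split; first by exists j.
move=> c ck.
have : row i (kermx A) *m A = 0 by apply/sub_kermxP; rewrite row_sub.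
move/matrixP => /(_ 0 c); rewrite !mxE => E.
apply: etrans E; apply: eq_bigr => u _; by rewrite !mxE (negbTE ck).
Qed.

Lemma quad_expand (n : nat) (k : 'I_n) (a : 'I_n -> 'I_n -> rat) (z : 'I_n -> rat) :
  \sum_(c | c != k) (\sum_u z u * a u c) ^+ 2 =
  \sum_u \sum_u' z u * z u' * \sum_(c | c != k) a u c * a u' c.
Proof.
rewrite (eq_bigr (fun c => \sum_u \sum_u' z u * z u' * (a u c * a u' c))); last first.
  move=> c _; rewrite expr2 mulr_suml; apply: eq_bigr => u _.
  rewrite mulr_sumr; apply: eq_bigr => u' _; ring.
rewrite exchange_big; apply: eq_bigr => u _.
rewrite exchange_big; apply: eq_bigr => u' _.
by rewrite mulr_sumr.
Qed.

Lemma core (n : nat) (adj : rel 'I_n) (a : 'I_n -> 'I_n -> rat) (k v y : 'I_n) :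
  (forall x z, connect adj x z) ->
  (forall u u', u != u' -> \sum_c a u c * a u' c = - (adj u u')%:R) ->
  (forall u, \sum_c a u c + \sum_c a u c * a u c = 2) ->
  (forall u, 2 <= \sum_c a u c * a u c) ->
  (forall u, a u k != 0 -> u = v) ->
  a v k = -1 ->
  4 <= \sum_c a y c * a y c ->
  v != y /\ \sum_c a v c * a v c < 3.
Proof.
move=> conn Hoff Hadj He2 Hk Hvk Hy.
have [z [[j zj] Hz]] := @ker_exists n k a.
pose w u := `|z u|.
pose g u u' := \sum_(c | c != k) a u c * a u' c.
have goff u u' : u != u' -> g u u' = - (adj u u')%:R.
  move=> uu; rewrite -Hoff // [RHS](bigD1 k) //=.
  have -> : a u k * a u' k = 0; last by rewrite add0r.
  case: (eqVneq (a u k) 0) => [->|/Hk eu]; first by rewrite mul0r.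
  case: (eqVneq (a u' k) 0) => [->|/Hk eu']; first by rewrite mulr0.
  by move: uu; rewrite eu eu' eqxx.
have Fz : \sum_(c | c != k) (\sum_u z u * a u c) ^+ 2 = 0.
  by rewrite big1 // => c ck; rewrite Hz // expr0n.
have Fw : \sum_(c | c != k) (\sum_u w u * a u c) ^+ 2 = 0.
  apply/eqP; rewrite eq_le sumr_ge0 ?andbT; last by move=> c _; apply: sqr_ge0.
  rewrite -[X in _ <= X]Fz !quad_expand; apply: ler_sum => u _; apply: ler_sum => u' _.
  case: (eqVneq u u') => [<-|uu].
    by rewrite /w -normrM ger0_norm // -expr2 sqr_ge0.
  have := goff u u' uu; rewrite /g => ->; apply: ler_wnM2r; first by rewrite oppr_le0 ler0n.
  by rewrite /w -normrM ler_norm.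
have Hw c : c != k -> \sum_u w u * a u c = 0.
  move=> ck; apply/eqP; rewrite -sqrf_eq0; apply/eqP.
  by apply: (psumr_eq0P _ Fw) => // c' _; apply: sqr_ge0.
have Hh u : \sum_u' w u' * g u u' = 0.
  rewrite (eq_bigr (fun u' => \sum_(c | c != k) a u c * (w u' * a u' c))); last first.
    by move=> u' _; rewrite mulr_sumr; apply: eq_bigr => c _; ring.
  by rewrite exchange_big big1 // => c ck; rewrite -mulr_sumr Hw // mulr0.
have Hzero u u' : w u = 0 -> adj u u' -> w u' = 0.
  move=> wu auu; case: (eqVneq u' u) => [->//|uu].
  have := Hh u; rewrite (bigD1 u) //= wu mul0r add0r.
  rewrite (eq_bigr (fun x => - (w x * (adj u x)%:R))); last first.
    by move=> x xu; rewrite (goff u x) 1?eq_sym // mulrN.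
  rewrite sumrN => /eqP; rewrite oppr_eq0 => /eqP H0.
  have := psumr_eq0P _ H0 uu; rewrite auu mulr1; apply.
  by move=> x _; apply: mulr_ge0; [apply: normr_ge0 | apply: ler0n].
have Hpath p x : path adj x p -> w x = 0 -> w (last x p) = 0.
  elim: p x => [//|x' p IH] x /= /andP [ax px] wx.
  by apply: IH => //; apply: Hzero ax.
have wpos u : 0 < w u.
  rewrite lt_def normr_ge0 andbT; apply/eqP => wu0.
  have /connectP [p Hp Hl] := conn u j.
  have := Hpath p u Hp wu0; rewrite -Hl /w => /eqP; rewrite normr_eq0 (negbTE zj).
  by [].
have Hid : \sum_u (\sum_c a u c * a u c - 2) * w u = w v.
  have e u : \sum_c a u c * a u c - 2 = - \sum_c a u c.
    by have := Hadj u; lra.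
  rewrite (eq_bigr (fun u => - \sum_c w u * a u c)); last first.
    move=> u _; rewrite e mulNr mulr_suml; congr (- _); apply: eq_bigr => c _; ring.
  rewrite sumrN exchange_big (bigD1 k) //= [X in _ + X]big1 ?addr0; last by move=> c ck; move: (Hw c ck).
  rewrite (bigD1 v) //= big1 ?addr0; first by rewrite Hvk; ring.
  move=> u uv; case: (eqVneq (a u k) 0) => [->|/Hk uv']; first by rewrite mulr0.
  by rewrite uv' eqxx in uv.
have Hnn u : 0 <= (\sum_c a u c * a u c - 2) * w u.
  by apply: mulr_ge0; [rewrite subr_ge0 | apply: ltW].
have wv := wpos v; have wy := wpos y.
case: (eqVneq v y) => [vy|vy].
  move: Hid; rewrite (bigD1 y) //= -vy.
  have : 0 <= \sum_(u | u != y) (\sum_c a u c * a u c - 2) * w u.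
    by apply: sumr_ge0 => u _; apply: Hnn.
  move: Hy; rewrite -vy; nra.
split => //.
move: Hid; rewrite (bigD1 v) //= [X in _ + X = _](bigD1 y) /=; last by rewrite eq_sym.
have : 0 <= \sum_(u | (u != v) && (u != y)) (\sum_c a u c * a u c - 2) * w u.
  by apply: sumr_ge0 => u _; apply: Hnn.
nra.
Qed.

Lemma coeffs_mem (n : nat) (phi : 'I_n -> 'I_n -> int) (i u : 'I_n) :
  phi u i != 0 -> phi u i \in coeffs phi i.
Proof. by move=> nz; rewrite /coeffs; apply: map_f; rewrite mem_filter mem_enum andbT. Qed.

Lemma coeffs_one (n : nat) (phi : 'I_n -> 'I_n -> int) (i u u' : 'I_n) (m : int) :
  perm_eq (coeffs phi i) [:: m] -> phi u i != 0 -> phi u' i != 0 -> u = u'.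
Proof.
move=> pe nu nu'; apply/eqP; apply/negPn/negP => uu.
have := perm_size pe; rewrite /coeffs size_map /= => sz.
have : (size [:: u; u'] <= size [seq v <- enum 'I_n | phi v i != 0])%N.
  apply: uniq_leq_size; first by rewrite /= inE andbT.
  by move=> x; rewrite !inE mem_filter mem_enum andbT => /orP [] /eqP ->.
by rewrite sz.
Qed.

Lemma sum_intr (n : nat) (f g : 'I_n -> int) :
  (\sum_c f c * g c)%:~R = \sum_c ((f c)%:~R * (g c)%:~R) :> rat.
Proof. rewrite rmorph_sum; apply: eq_bigr => c _; exact: intrM. Qed.

Lemma sum_intr1 (n : nat) (f : 'I_n -> int) :
  (\sum_c f c)%:~R = \sum_c (f c)%:~R :> rat.
Proof. by rewrite rmorph_sum. Qed.

Theorem proposition5p4 (n : nat) (adj : rel 'I_n) (d : 'I_n -> int)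
    (phi : 'I_n -> 'I_n -> int) (k : 'I_n) :
  (0 < n)%N ->
  is_tree adj -> minimal d ->
  symplectic_embedding adj d phi ->
  #|[set i | type9 phi i]| = 1%N ->
  #|[set i | type5 phi i]| = 1%N ->
  type2 phi k ->
  (forall j, type2 phi j -> j = k) ->
  (forall i, ~~ type9 phi i -> ~~ type5 phi i -> ~~ type2 phi i ->
     type4 phi i || type7 phi i) ->
  forall v, phi v k != 0 ->
    d v = -2 /\ exists iv : 'I_n, forall j, phi v j = E iv j - E k j.
Proof.
move=> _ [_ [conn _]] mind [Hoff [Hd Hadj]] _ H5 H2 _ _ v vk.
have H2' : perm_eq (coeffs phi k) [:: -1] := H2.
pose e u := \sum_c phi u c * phi u c.
have Hadj' u : \sum_c phi u c + e u = 2.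
  have := Hadj u; rewrite /Qn /Kvec => H.
  have -> : \sum_c phi u c = \sum_(i < n) phi u i * 1 by apply: eq_bigr => c _; rewrite mulr1.
  by rewrite /e; move: H; rewrite -opprD => /eqP; rewrite eqr_opp => /eqP.
have He2 u : 2 <= e u.
  have e0 : 0 <= e u by apply: sumr_ge0 => c _; rewrite -expr2 sqr_ge0.
  have e1 : e u != 1.
    by have := mind u; rewrite -Hd /Qn; apply: contra; rewrite /e => /eqP ->.
  have e2 : e u != 0.
    apply/eqP => /eqP ez.
    have Hz c : phi u c * phi u c = 0.
      apply: (@psumr_eq0P _ _ predT (fun c => phi u c * phi u c) _ (eqP ez)) => // i _.
      by rewrite -expr2 sqr_ge0.
    have := Hadj' u; rewrite (eqP ez) addr0 big1 // => c _.
    by have /eqP := Hz c; rewrite mulf_eq0 orbb => /eqP.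
  by move: e0 e1 e2; lia.
have Hkm1 u : phi u k != 0 -> phi u k = -1.
  move=> nz; have := perm_mem H2' (phi u k); rewrite coeffs_mem // inE.
  by move=> /esym /eqP.
have Hk u : phi u k != 0 -> u = v by move=> nz; exact: (@coeffs_one _ _ _ _ _ _ H2' nz vk).
have [q] : exists q, q \in [set i | type5 phi i].
  by apply/set0Pn; rewrite -card_gt0 H5.
rewrite inE => /perm_mem Hq.
have : -2 \in coeffs phi q by rewrite Hq !inE eqxx orbT.
case/mapP => y _ yq.
have Hy : 4 <= e y.
  rewrite /e (bigD1 q) //= -yq.
  have : 0 <= \sum_(c | c != q) phi y c * phi y c.
    by apply: sumr_ge0 => c _; rewrite -expr2 sqr_ge0.
  by rewrite lerDl.
pose a u c := (phi u c)%:~R : rat.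
have Ho u u' : u != u' -> \sum_c a u c * a u' c = - (adj u u')%:R.
  move=> uu; rewrite -(@sum_intr n (phi u) (phi u')).
  have := Hoff u u' uu; rewrite /Qn => H.
  have -> : \sum_c phi u c * phi u' c = - (adj u u')%:Z by rewrite -H opprK.
  by case: (adj u u').
have Ha u : \sum_c a u c + \sum_c a u c * a u c = 2.
  rewrite -(@sum_intr1 n (phi u)) -(@sum_intr n (phi u) (phi u)) -intrD.
  by have := Hadj' u; rewrite /e => ->.
have He u : 2 <= \sum_c a u c * a u c.
  by rewrite -(@sum_intr n (phi u) (phi u)) (_ : 2 = 2%:~R) // ler_int; apply: He2.
have Hk' u : a u k != 0 -> u = v by rewrite /a intr_eq0 => /Hk.
have Hvk : a v k = -1 by rewrite /a Hkm1.
have Hy' : 4 <= \sum_c a y c * a y c.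
  by rewrite -(@sum_intr n (phi y) (phi y)) (_ : 4 = 4%:~R) // ler_int.
have [_ ev3] := @core n adj a k v y conn Ho Ha He Hk' Hvk Hy'.
have ev : e v = 2.
  move: ev3; rewrite -(@sum_intr n (phi v) (phi v)) (_ : 3 = 3%:~R) // ltr_int => ev3.
  by have := He2 v; rewrite /e; move: ev3; lia.
split; first by rewrite -Hd /Qn; rewrite -/(e v) ev.
have vk1 := Hkm1 v vk.
have s2 : \sum_(c | c != k) phi v c * phi v c = 1.
  move: ev; rewrite /e (bigD1 k) //= vk1.
  move: (\sum_(c | c != k) phi v c * phi v c) => S; lia.
have s1 : \sum_(c | c != k) phi v c = 1.
  have := Hadj' v; rewrite ev (bigD1 k) //= vk1.
  move: (\sum_(c | c != k) phi v c) => S; lia.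
have [iv /andP [ivk ivnz]] : exists iv, (iv != k) && (phi v iv != 0).
  case: (pickP (fun c => (c != k) && (phi v c != 0))) => [iv H|H]; first by exists iv.
  exfalso; move: s2; rewrite big1 // => c ck.
  by have := H c; rewrite ck /= => /negbFE /eqP ->; rewrite mul0r.
have r0 : 0 <= \sum_(c | (c != k) && (c != iv)) phi v c * phi v c.
  by apply: sumr_ge0 => c _; rewrite -expr2 sqr_ge0.
have p1 : 1 <= phi v iv * phi v iv.
  by move: ivnz; move: (phi v iv) => x /eqP; lia.
have S0 : \sum_(c | (c != k) && (c != iv)) phi v c * phi v c = 0.
  move: s2; rewrite (bigD1 iv) //=.
  move: r0 p1; move: (\sum_(c | (c != k) && (c != iv)) phi v c * phi v c) (phi v iv * phi v iv) => S P; lia.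
have Hz c : c != k -> c != iv -> phi v c = 0.
  move=> ck civ.
  have nn : forall i, (i != k) && (i != iv) -> 0 <= phi v i * phi v i.
    by move=> i _; rewrite -expr2 sqr_ge0.
  have := @psumr_eq0P _ _ (fun c => (c != k) && (c != iv)) (fun c => phi v c * phi v c) nn S0 c.
  by rewrite ck civ => /(_ isT) /eqP; rewrite mulf_eq0 orbb => /eqP.
have piv : phi v iv = 1.
  move: s1; rewrite (bigD1 iv) //= big1 ?addr0 //.
  by move=> c /andP [ck civ]; apply: Hz.
exists iv => j; rewrite /E.
case: (eqVneq j k) => [->|jk].
  by rewrite vk1 (negbTE ivk).
case: (eqVneq j iv) => [->|jiv].
  by rewrite piv.
by rewrite Hz // eq_sym (negbTE jiv) eq_sym (negbTE jk).
Qed.
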